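(* Let $\mathcal{G}$ be a finite connected undirected simple graph with vertices $1,\dots,N$ and let $Z,Z'\in\mathbf{Z}^N$. Then $\Phi_h(K,\mathcal{G},Z)=\Phi_h(K,\mathcal{G},Z')$ for every integer $K\ge 2$ and every $K$-harmonic function $h$ on $\mathcal{G}$ if and only if there exists an integer vector $U\in\mathbf{Z}^N$ with $Z'=Z+\nabla^2 U$. Consequently a map $\eta:\mathbf{Z}^N\to\mathbf{Z}^N$ is isoinvariant if and only if for every $Z$ one has $\eta(Z)=Z+\nabla^2U$ for some $U\in\mathbf{Z}^N$ (depending on $Z$).
   Context: $d_i$ is the degree of vertex $i$; the Laplacian $\nabla^2$ is the $N\times N$ integer matrix with $\nabla^2_{ii}=d_i$, $\nabla^2_{ij}=-1$ if $i\sim j$ (adjacent), $0$ otherwise. $\mathbf{Z}_K=\{0,\dots,K-1\}$. A function $h:\{1,\dots,N\}\to\mathbf{Z}_K$ is $K$-harmonic if $(\nabla^2 h)(i)\equiv 0\pmod K$ for all $i$. For a configuration $Z=(z(1),\dots,z(N))\in\mathbf{Z}^N$, $\Phi_h(K,\mathcal{G},Z)=\left(\sum_i h(i)z(i)\right)\bmod K$. A map $\eta:\mathbf{Z}^N\to\mathbf{Z}^N$ is called isoinvariant if $\Phi_h(K,\mathcal{G},\eta(Z))=\Phi_h(K,\mathcal{G},Z)$ for all $Z$, all integers $K\ge2$ and all $K$-harmonic $h$. *)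

(* Defs.v *)
From mathcomp Require Import all_boot all_order all_algebra.
Set Implicit Arguments. Unset Strict Implicit. Unset Printing Implicit Defensive.
Import Order.TTheory GRing.Theory Num.Theory.
Local Open Scope ring_scope.

(* A finite simple undirected graph on vertices 'I_N (vertex i <-> i+1 in the
   paper) is given by an adjacency relation e which is symmetric and irreflexive. *)
Definition simple_graph N (e : rel 'I_N) : Prop :=
  symmetric e /\ irreflexive e.

Definition connected_graph N (e : rel 'I_N) : Prop :=
  forall i j : 'I_N, connect e i j.

Definition deg N (e : rel 'I_N) (i : 'I_N) : nat := #|[pred j | e i j]|.

Definition laplacian N (e : rel 'I_N) : 'M[int]_N :=
  \matrix_(i, j) (if i == j then (deg e i)%:Z else if e i j then -1 else 0).

Definition lap_apply N (e : rel 'I_N) (u : 'I_N -> int) (i : 'I_N) : int :=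
  \sum_(j < N) laplacian e i j * u j.

(* h : vertices -> Z_K, represented by integer values in {0,...,K-1}. *)
Definition K_harmonic N (e : rel 'I_N) (K : int) (h : 'I_N -> int) : Prop :=
  (forall i, 0 <= h i < K) /\ (forall i, (K %| lap_apply e h i)%Z).

Definition Phi N (h : 'I_N -> int) (K : int) (z : 'I_N -> int) : int :=
  ((\sum_(i < N) h i * z i) %% K)%Z.

Definition isoinvariant N (e : rel 'I_N) (eta : ('I_N -> int) -> ('I_N -> int)) : Prop :=
  forall (z : 'I_N -> int) (K : int) (h : 'I_N -> int),
    2 <= K -> K_harmonic e K h -> Phi h K (eta z) = Phi h K z.

(* Main.v *)
Require Import Defs.
From mathcomp Require Import all_boot all_order all_algebra.
From mathcomp Require Import ring.
Import Order.TTheory GRing.Theory Num.Theory.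
Local Open Scope ring_scope.

Lemma modsum n (K : int) (a b : 'I_n -> int) :
  (K %| \sum_j a j * (b j %% K)%Z - \sum_j a j * b j)%Z.
Proof.
rewrite -sumrB; apply: rpred_sum => j _; rewrite -mulrBr; apply: dvdz_mull.
have -> : ((b j %% K)%Z - b j) = - ((b j %/ K)%Z * K).
  by rewrite {2}(divz_eq (b j) K); ring.
by rewrite rpredN dvdz_mull ?dvdzz.
Qed.

Lemma lap_sym N (e : rel 'I_N) : simple_graph e ->
  forall i j, laplacian e i j = laplacian e j i.
Proof.
move=> [se _] i j; rewrite !mxE.
case: (eqVneq i j) => [->|ne]; first by [].
by rewrite se.
Qed.

Lemma part1 (N : nat) (e : rel 'I_N) : simple_graph e ->
  (forall z z' : 'I_N -> int,
     (forall (K : int) (h : 'I_N -> int), 2 <= K -> K_harmonic e K h ->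
        Phi h K z = Phi h K z') <->
     (exists u : 'I_N -> int, forall i, z' i = z i + lap_apply e u i)).
Proof.
move=> sg; have symA := @lap_sym _ _ sg.
move=> z z'; split; last first.
  move=> [u Hu] K h K2 [hb hd]; rewrite /Phi; apply/eqP; rewrite eqz_mod_dvd.
  under [X in _ - X]eq_bigr do rewrite Hu mulrDr.
  rewrite big_split /= opprD addrA subrr add0r rpredN.
  have -> : \sum_(i < N) h i * lap_apply e u i = \sum_(j < N) u j * lap_apply e h j.
    rewrite /lap_apply; under eq_bigr do rewrite big_distrr.
    rewrite exchange_big; apply: eq_bigr => j _; rewrite big_distrr.
    by apply: eq_bigr => i _; rewrite (symA i j) /= mulrCA [RHS]mulrCA (mulrC (u j)).
  by apply: rpred_sum => j _; apply: dvdz_mull.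
move=> H.
set A := laplacian e.
have [L uL [R uR [d _ dA]]] := int_Smith_normal_form A.
set D := \matrix_(i, j) (d`_i *+ (i == j :> nat)) in dA.
set w : 'cV[int]_N := \col_i (z' i - z i).
set v := invmx L *m w.
have LiA : invmx L *m A = D *m R by rewrite dA !mulmxA mulVmx // mul1mx.
have DE : D = diag_mx (\row_i d`_i) by apply/matrixP => i j; rewrite !mxE.
case: (pickP (fun i => ~~ (d`_i %| v i ord0)%Z)) => [i ndv | alldv]; last first.
  set y : 'cV[int]_N := \col_k ((v k ord0) %/ d`_k)%Z.
  exists (fun j => (invmx R *m y) j ord0).
  have Dy : D *m y = v.
    apply/matrixP=> k l; rewrite (ord1 l) DE mul_diag_mx !mxE mulrC divzK //.
    by move: (alldv k) => /negbFE; rewrite /v mxE => ->.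
  have Aw : A *m (invmx R *m y) = w.
    by rewrite dA -!mulmxA (mulmxA R) mulmxV // mul1mx Dy /v mulmxA mulmxV // mul1mx.
  move=> k; move/matrixP: Aw => /(_ k ord0); rewrite !mxE /lap_apply /A => E.
  rewrite -[z' k](subrK (z k)) [LHS]addrC; congr (_ + _); symmetry; exact: E.
exfalso.
set di := d`_i in ndv. set vi := v i ord0 in ndv.
pose kN := if di == 0 then (`|vi| + 2)%N else `|di|%N.
pose K : int := kN%:Z.
have dvK x : (K %| x)%Z = (kN %| `|x|)%N by [].
have K2 : 2 <= K.
  rewrite /K lez_nat /kN; case: eqP => [_|nz]; first by rewrite leq_addl.
  have n0 : `|di|%N != 0%N by rewrite absz_eq0; apply/eqP.
  have n1 : `|di|%N != 1%N.
    by apply: contra ndv => /eqP h1; rewrite dvdzE h1 dvd1n.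
  by case: (`|di|%N) n0 n1 => [|[|]].
have KdI : (K %| di)%Z.
  rewrite dvK /kN; case: eqP => [->|_]; first by rewrite dvdn0.
  exact: dvdnn.
have KnV : ~~ (K %| vi)%Z.
  rewrite dvK /kN; case: eqP => [d0|_]; last by [].
  move: ndv; rewrite d0 dvd0z => vn0.
  apply/negP => /dvdn_leq; rewrite absz_gt0 => /(_ vn0).
  by rewrite -addSnnS leqNgt ltnS leq_addr.
have Kpos : 0 < K by apply: lt_le_trans K2.
pose h0 := fun j => invmx L i j.
pose h := fun j => (h0 j %% K)%Z.
have hh : K_harmonic e K h.
  split.
    by move=> j; rewrite modz_ge0 ?ltz_pmod // gt_eqF.
  move=> k; rewrite /lap_apply.
  have E : \sum_j A k j * h0 j = di * R i k.
    transitivity ((invmx L *m A) i k); last by rewrite LiA DE mul_diag_mx !mxE.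
    by rewrite mxE; apply: eq_bigr => j _; rewrite (symA k j) mulrC.
  rewrite -(subrK (\sum_j A k j * h0 j) (\sum_j A k j * h j)).
  by rewrite rpredD ?modsum // E dvdz_mulr.
have := H K h K2 hh; rewrite /Phi => /eqP; rewrite eqz_mod_dvd -rpredN opprB -sumrB.
have -> : \sum_(i < N) (h i * z' i - h i * z i) = \sum_j w j ord0 * h0 j +
   (\sum_j w j ord0 * h j - \sum_j w j ord0 * h0 j).
  rewrite addrC subrK; apply: eq_bigr => j _; rewrite !mxE; ring.
rewrite rpredDr ?modsum //.
have -> : \sum_j w j ord0 * h0 j = vi.
  by rewrite /vi /v mxE; apply: eq_bigr => j _; rewrite mulrC.
by apply/negP: KnV.
Qed.

Theorem theorem2 (N : nat) (e : rel 'I_N) :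
  simple_graph e -> connected_graph e ->
  (forall z z' : 'I_N -> int,
     (forall (K : int) (h : 'I_N -> int), 2 <= K -> K_harmonic e K h ->
        Phi h K z = Phi h K z') <->
     (exists u : 'I_N -> int, forall i, z' i = z i + lap_apply e u i))
  /\
  (forall eta : ('I_N -> int) -> ('I_N -> int),
     isoinvariant e eta <->
     (forall z, exists u : 'I_N -> int, forall i, eta z i = z i + lap_apply e u i)).
Proof.
move=> sg _; have P1 := @part1 _ _ sg; split => // eta; split.
  move=> iso z; apply/P1 => K h K2 hh; by rewrite (iso z K h K2 hh).
move=> Hz z K h K2 hh; symmetry; exact: (proj2 (P1 z (eta z)) (Hz z)).
Qed.
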